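(* If $\mathbf{Z}$ has a rotationally invariant distribution supported on the unit sphere, then Assumption (β) holds with $\beta=1$, i.e. $\max_{\mathbf{w}:\theta(\mathbf{w},\mathbf{w}_* )\le\phi}\lambda_{\max}(\mathbf{A}_{\mathbf{w},-\mathbf{w}_*})\le\phi$ for all $0\le\phi\le\pi/2$.
   Context: $\mathbf{Z}\in\mathbb{R}^p$ is a random vector, $\mathbf{w}_*\neq\mathbf{0}$ fixed, $\theta(\mathbf{u},\mathbf{v})\in[0,\pi]$ the angle between vectors, and $\mathbf{A}_{\mathbf{w},-\mathbf{w}_*}=\mathbb{E}[\mathbf{Z}\mathbf{Z}^\top\mathbb{I}\{\mathbf{w}^\top\mathbf{Z}\ge0,\mathbf{w}_*^\top\mathbf{Z}\le0\}]$. Assumption (β) with constant $\beta$: for all $0\le\phi\le\pi/2$, $\max_{\mathbf{w}:\theta(\mathbf{w},\mathbf{w}_* )\le\phi}\lambda_{\max}(\mathbf{A}_{\mathbf{w},-\mathbf{w}_*})\le\beta\phi$. *)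

(* Defs.v *)
From HB Require Import structures.
From mathcomp Require Import all_boot all_order all_algebra.
From mathcomp Require Import all_classical all_reals all_analysis.
Set Implicit Arguments. Unset Strict Implicit. Unset Printing Implicit Defensive.
Import Order.TTheory GRing.Theory Num.Theory.
Import numFieldNormedType.Exports.
Local Open Scope classical_set_scope.
Local Open Scope ring_scope.

Definition dotv {R : realType} {p : nat} (u v : 'rV[R]_p) : R :=
  \sum_(i < p) u 0 i * v 0 i.

Definition vnorm {R : realType} {p : nat} (u : 'rV[R]_p) : R := Num.sqrt (dotv u u).

Definition vangle {R : realType} {p : nat} (u v : 'rV[R]_p) : R :=
  acos (dotv u v / (vnorm u * vnorm v)).

(* Q is an orthogonal p x p matrix (a rotation in the broad sense) *)
Definition orthogonal_mx {R : realType} {p : nat} (Q : 'M[R]_p) : Prop :=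
  Q *m Q^T = 1%:M.

(* The law of Z is rotationally invariant: Z Q has the same distribution as Z
   for every orthogonal Q, i.e. both laws agree on every Borel set of R^p
   (the sigma-algebra generated by the open sets). *)
Definition rot_invariant {R : realType} {d : measure_display} {T : measurableType d}
  (P : probability T R) {p : nat} (Z : T -> 'rV[R]_p) : Prop :=
  forall Q : 'M[R]_p, orthogonal_mx Q ->
  forall B : set 'rV[R]_p, <<s open >> B ->
    P (Z @^-1` B) = P ((fun x => Z x *m Q) @^-1` B).

(* A_{w,-w*} = E[ Z Z^T 1{w^T Z >= 0, w*^T Z <= 0} ] *)
Definition Amat {R : realType} {d : measure_display} {T : measurableType d}
  (P : probability T R) {p : nat} (Z : T -> 'rV[R]_p) (w ws : 'rV[R]_p) : 'M[R]_p :=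
  \matrix_(i < p, j < p)
    fine (\int[P]_x ((Z x 0 i * Z x 0 j *
            ((0 <= dotv w (Z x)) && (dotv ws (Z x) <= 0))%:R)%:E))%E.

(* Main.v *)
Require Import Defs.
From HB Require Import structures.
From mathcomp Require Import all_boot all_order all_algebra.
From mathcomp Require Import all_classical all_reals all_analysis.
From mathcomp Require Import ring lra.
Import Order.TTheory GRing.Theory Num.Theory.
Import numFieldNormedType.Exports.
Local Open Scope classical_set_scope.
Local Open Scope ring_scope.

Section LinAlg.
Context {R : realType} {p : nat}.
Implicit Types (u v w z : 'rV[R]_p).

Lemma dotvC u v : dotv u v = dotv v u.
Proof. by rewrite /dotv; apply: eq_bigr => i _; rewrite mulrC. Qed.

Lemma dotvDl u v w : dotv (u + v) w = dotv u w + dotv v w.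
Proof. by rewrite /dotv -big_split; apply: eq_bigr => i _; rewrite !mxE mulrDl. Qed.

Lemma dotvDr u v w : dotv w (u + v) = dotv w u + dotv w v.
Proof. by rewrite dotvC dotvDl !(dotvC w). Qed.

Lemma dotvZl (k : R) u v : dotv (k *: u) v = k * dotv u v.
Proof. by rewrite /dotv mulr_sumr; apply: eq_bigr => i _; rewrite !mxE mulrA. Qed.

Lemma dotvZr (k : R) u v : dotv v (k *: u) = k * dotv v u.
Proof. by rewrite dotvC dotvZl dotvC. Qed.

Lemma dotvNl u v : dotv (- u) v = - dotv u v.
Proof. by rewrite -scaleN1r dotvZl mulN1r. Qed.

Lemma dotvNr u v : dotv v (- u) = - dotv v u.
Proof. by rewrite -scaleN1r dotvZr mulN1r. Qed.

Lemma dotvBl u v w : dotv (u - v) w = dotv u w - dotv v w.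
Proof. by rewrite dotvDl dotvNl. Qed.

Lemma dotvBr u v w : dotv w (u - v) = dotv w u - dotv w v.
Proof. by rewrite dotvDr dotvNr. Qed.

Lemma dotv0l u : dotv 0 u = 0.
Proof. by rewrite /dotv big1 // => i _; rewrite mxE mul0r. Qed.

Lemma dotv_ge0 u : 0 <= dotv u u.
Proof. by rewrite /dotv sumr_ge0 // => i _; rewrite -expr2 sqr_ge0. Qed.

Lemma dotv_eq0 u : dotv u u = 0 -> u = 0.
Proof.
move=> H; apply/rowP => i; rewrite mxE.
have : u 0 i * u 0 i = 0.
  move/eqP: H; rewrite /dotv psumr_eq0 => [/allP Hall|j _]; last by rewrite -expr2 sqr_ge0.
  by apply/eqP; apply: Hall; rewrite mem_index_enum.
by move/eqP; rewrite mulf_eq0 orbb => /eqP.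
Qed.

Lemma mx_dotv u v : u *m v^T = (dotv u v)%:M.
Proof.
apply/matrixP => i j; rewrite !mxE !ord1 eqxx mulr1n /dotv.
by apply: eq_bigr => k _; rewrite !mxE.
Qed.

Lemma dotv_mulmx u v (M : 'M[R]_p) : dotv u (v *m M) = dotv (u *m M^T) v.
Proof.
have H : forall a b : 'rV[R]_p, dotv a b = (a *m b^T) 0 0.
  by move=> a b; rewrite mxE /dotv; apply: eq_bigr => k _; rewrite !mxE.
by rewrite !H trmx_mul mulmxA.
Qed.

Lemma CS u v : dotv u v ^+ 2 <= dotv u u * dotv v v.
Proof.
have [H0|Hn] := eqVneq (dotv u u) 0.
  by rewrite (dotv_eq0 u H0) !dotv0l expr0n /= mul0r.
have Hp : 0 < dotv u u by rewrite lt_def Hn dotv_ge0.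
set t := dotv u v / dotv u u.
have := dotv_ge0 (v - t *: u).
rewrite !dotvBl !dotvBr !dotvZl !dotvZr (dotvC u v) => H.
have E : dotv v v - t * dotv v u - (t * dotv v u - t * (t * dotv u u))
   = dotv v v - dotv v u ^+ 2 / dotv u u.
  by rewrite /t (dotvC u v); field; rewrite Hn.
rewrite E subr_ge0 ler_pdivrMr // in H.
by rewrite mulrC.
Qed.

(* rotation in the plane (a,b) *)
Definition rotmx (a b : 'rV[R]_p) (c s : R) : 'M[R]_p :=
  1%:M + (c - 1) *: (a^T *m a + b^T *m b) + s *: (a^T *m b - b^T *m a).

Lemma rotE a b c s u : u *m rotmx a b c s =
  u + (c - 1) *: (dotv u a *: a + dotv u b *: b) + s *: (dotv u a *: b - dotv u b *: a).
Proof.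
rewrite /rotmx !mulmxDr mulmx1 -!scalemxAr !mulmxDr mulmxN !mulmxA !mx_dotv.
by rewrite !mul_scalar_mx.
Qed.

Lemma orth_dot (Q : 'M[R]_p) :
  (forall u v, dotv (u *m Q) (v *m Q) = dotv u v) -> orthogonal_mx Q.
Proof.
move=> H; apply/matrixP => i j.
have Hd (k : 'I_p) : dotv (delta_mx 0 i) (delta_mx 0 k) = (i == k)%:R :> R.
  rewrite /dotv (bigD1 i) //= big1 => [|l /negPf Hl]; last first.
    by rewrite !mxE Hl andbF mul0r.
  rewrite !mxE !eqxx /= mul1r addr0.
  by case: (i == k).
rewrite !mxE -Hd -H /dotv; apply: eq_bigr => k _.
rewrite !mxE; congr (_ * _).
  rewrite (bigD1 i) //= big1 => [|l /negPf Hl]; last by rewrite !mxE Hl andbF mul0r.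
  by rewrite !mxE !eqxx mul1r addr0.
rewrite (bigD1 j) //= big1 => [|l /negPf Hl]; last by rewrite !mxE Hl andbF mul0r.
by rewrite !mxE !eqxx mul1r addr0.
Qed.

Lemma rot_orth a b c s : dotv a a = 1 -> dotv b b = 1 -> dotv a b = 0 ->
  c ^+ 2 + s ^+ 2 = 1 -> orthogonal_mx (rotmx a b c s).
Proof.
move=> Ha Hb Hab Hcs; apply: orth_dot => u v; rewrite !rotE.
rewrite !(dotvDl, dotvDr, dotvBl, dotvBr, dotvZl, dotvZr, dotvNl, dotvNr).
rewrite ?Ha ?Hb ?Hab (dotvC b a) ?Hab ?(dotvC a u) ?(dotvC b u) ?(dotvC a v) ?(dotvC b v).
move: (dotv u a) (dotv u b) (dotv v a) (dotv v b) => ua ub va vb.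
transitivity (dotv u v + (ua*va+ub*vb)*(c^+2+s^+2-1)); first by ring.
by rewrite Hcs subrr mulr0 addr0.
Qed.


Lemma rot_a a b c s : dotv a a = 1 -> dotv a b = 0 ->
  a *m rotmx a b c s = c *: a + s *: b.
Proof.
move=> Ha Hab; rewrite rotE Ha Hab.
by apply/rowP => j; rewrite !mxE; ring.
Qed.

Lemma rot_b a b c s : dotv b b = 1 -> dotv a b = 0 ->
  b *m rotmx a b c s = c *: b - s *: a.
Proof.
move=> Hb Hab; rewrite rotE Hb dotvC Hab.
by apply/rowP => j; rewrite !mxE; ring.
Qed.

Definition citer a b c s k := iter k (fun x => x *m rotmx a b c s) a.

Lemma citerS a b c s k : citer a b c s k.+1 = citer a b c s k *m rotmx a b c s.
Proof. by []. Qed.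

Lemma citer_trig a b (t : R) k : dotv a a = 1 -> dotv b b = 1 -> dotv a b = 0 ->
  citer a b (cos t) (sin t) k = cos (k%:R * t) *: a + sin (k%:R * t) *: b.
Proof.
move=> Ha Hb Hab; elim: k => [|k IH].
  by rewrite /citer /= mul0r cos0 sin0 scale1r scale0r addr0.
rewrite citerS IH mulmxDl -!scalemxAl rot_a // rot_b //.
rewrite mulrSr mulrDl mul1r cosD sinD.
apply/rowP => j; rewrite !mxE; ring.
Qed.

Lemma citer_unit a b (t : R) k : dotv a a = 1 -> dotv b b = 1 -> dotv a b = 0 ->
  dotv (citer a b (cos t) (sin t) k) (citer a b (cos t) (sin t) k) = 1.
Proof.
move=> Ha Hb Hab; rewrite citer_trig //.
rewrite !(dotvDl, dotvDr, dotvZl, dotvZr) Ha Hb Hab dotvC Hab.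
by rewrite !mulr0 !addr0 !mulr1 add0r -!expr2 cos2Dsin2.
Qed.

Lemma citer_between a b (t : R) k : dotv a a = 1 -> dotv b b = 1 -> dotv a b = 0 ->
  sin (k.+1%:R * t) *: citer a b (cos t) (sin t) k =
  sin t *: citer a b (cos t) (sin t) 0 + sin (k%:R * t) *: citer a b (cos t) (sin t) k.+1.
Proof.
move=> Ha Hb Hab; rewrite !citer_trig //.
have H2 := cos2Dsin2 (k%:R * t).
rewrite mulrSr mulrDl mul1r cosD sinD mul0r cos0 sin0.
apply/rowP => j; rewrite !mxE.
move: H2; set C := cos (k%:R * t); set S := sin (k%:R * t) => H2.
transitivity (sin t * a 0 j * (C ^+ 2 + S ^+ 2) + S * (C * cos t - S * sin t) * a 0 j
  + S * (S * cos t + C * sin t) * b 0 j); first by ring.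
rewrite H2; ring.
Qed.


Lemma rot_to_unit u e : dotv u u = 1 -> dotv e e = 1 ->
  (exists Q : 'M[R]_p, orthogonal_mx Q /\ u *m Q = e) \/
  (exists c : R, c != 0 /\ e = c *: u).
Proof.
move=> Hu He.
set c := dotv u e; set b0 := e - c *: u.
have Hn2 : dotv b0 b0 = 1 - c ^+ 2.
  rewrite /b0 !(dotvBl, dotvBr, dotvZl, dotvZr) He Hu (dotvC e u) -/c; ring.
have [H0|Hn] := eqVneq (dotv b0 b0) 0.
  right; exists c; have Hb := dotv_eq0 b0 H0.
  have Ee : e = c *: u by apply/eqP; rewrite -subr_eq0 -/b0 Hb.
  split => //; apply/eqP => Hc.
  by move: He; rewrite Ee Hc scale0r dotv0l => /eqP; rewrite eq_sym oner_eq0.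
left.
have Hp : 0 < dotv b0 b0 by rewrite lt_def Hn dotv_ge0.
set s := Num.sqrt (dotv b0 b0).
have Hs : 0 < s by rewrite sqrtr_gt0.
have Hs2 : s ^+ 2 = dotv b0 b0 by rewrite sqr_sqrtr // ltW.
set b := s^-1 *: b0.
have Hb : dotv b b = 1.
  rewrite /b dotvZl dotvZr -Hs2; field; exact: lt0r_neq0.
have Hub : dotv u b = 0.
  rewrite /b dotvZr /b0 dotvBr dotvZr Hu -/c; ring.
exists (rotmx u b c s); split.
  apply: rot_orth => //; rewrite Hs2 Hn2; ring.
rewrite rot_a // /b scalerA mulfV ?scale1r; last exact: lt0r_neq0.
by rewrite /b0 addrC subrK.
Qed.
End LinAlg.

Section Borel.
Context {R : realType} {p : nat}.

Lemma dot_cont (u : 'rV[R]_p) : continuous (fun z : 'rV[R]_p => dotv u z).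
Proof.
rewrite /dotv.
suff H : forall s : seq 'I_p,
    continuous (fun z : 'rV[R]_p => \sum_(i <- s) u 0 i * z 0 i) by exact: H.
elim => [|i s IH].
  have -> : (fun z : 'rV[R]_p => \sum_(j <- [::]) u 0 j * z 0 j) = fun=> 0.
    by apply/funext => z; rewrite big_nil.
  exact: cst_continuous.
have -> : (fun z : 'rV[R]_p => \sum_(j <- i :: s) u 0 j * z 0 j) =
   (fun z : 'rV[R]_p => u 0 i * z 0 i) + (fun z => \sum_(j <- s) u 0 j * z 0 j).
  by apply/funext => z; rewrite big_cons.
move=> z; apply: continuousD; last exact: IH.
apply: (@continuousM R _ (fun=> u 0 i) (fun z : 'rV[R]_p => z 0 i)).
  exact: cst_continuous.
exact: coord_continuous.
Qed.

Lemma borel_lt (u : 'rV[R]_p) : <<s open >> [set z : 'rV[R]_p | dotv u z < 0].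
Proof.
apply: sub_sigma_algebra.
have -> : [set z : 'rV[R]_p | dotv u z < 0] = (dotv u) @^-1` [set x | x < 0] by [].
by move: (dot_cont u) => /continuousP; apply; exact: open_lt.
Qed.

Lemma borel_gt (u : 'rV[R]_p) : <<s open >> [set z : 'rV[R]_p | 0 < dotv u z].
Proof.
apply: sub_sigma_algebra.
have -> : [set z : 'rV[R]_p | 0 < dotv u z] = (dotv u) @^-1` [set x | 0 < x] by [].
by move: (dot_cont u) => /continuousP; apply; exact: open_gt.
Qed.

Lemma borel_ge (u : 'rV[R]_p) : <<s open >> [set z : 'rV[R]_p | 0 <= dotv u z].
Proof.
have -> : [set z : 'rV[R]_p | 0 <= dotv u z] = ~` [set z | dotv u z < 0].
  by apply/seteqP; split => z /=; rewrite real_leNgt ?num_real //; move=> /negP.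
rewrite -setTD; apply: sigma_algebraCD; exact: borel_lt.
Qed.

Lemma borel_le (u : 'rV[R]_p) : <<s open >> [set z : 'rV[R]_p | dotv u z <= 0].
Proof.
have -> : [set z : 'rV[R]_p | dotv u z <= 0] = ~` [set z | 0 < dotv u z].
  by apply/seteqP; split => z /=; rewrite real_leNgt ?num_real //; move=> /negP.
rewrite -setTD; apply: sigma_algebraCD; exact: borel_gt.
Qed.

Definition secR (u v : 'rV[R]_p) := [set z : 'rV[R]_p | 0 <= dotv u z /\ dotv v z <= 0].
Definition hypR (u : 'rV[R]_p) := [set z : 'rV[R]_p | dotv u z = 0].

Lemma borel_sec u v : <<s open >> (secR u v).
Proof.
have -> : secR u v = [set z | 0 <= dotv u z] `&` [set z | dotv v z <= 0] by [].
have H : (@open 'rV[R]_p).-sigma.-measurable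
   ([set z | 0 <= dotv u z] `&` [set z | dotv v z <= 0]).
  by apply: measurableI; [exact: borel_ge|exact: borel_le].
exact: H.
Qed.

Lemma borel_hyp u : <<s open >> (hypR u).
Proof.
have -> : hypR u = [set z | 0 <= dotv u z] `&` [set z | dotv u z <= 0].
  apply/seteqP; split => z /=; first by move=> ->.
  by move=> [H1 H2]; apply/eqP; rewrite eq_le H1 H2.
have H : (@open 'rV[R]_p).-sigma.-measurable
   ([set z | 0 <= dotv u z] `&` [set z | dotv u z <= 0]).
  by apply: measurableI; [exact: borel_ge|exact: borel_le].
exact: H.
Qed.

End Borel.

Section Prob.
Variables (R : realType) (d : measure_display) (T : measurableType d).
Variables (P : probability T R) (p : nat) (Z : T -> 'rV[R]_p).
Hypothesis HZ : forall i : 'I_p, measurable_fun setT (fun x => Z x 0 i).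
Hypothesis Hrot : rot_invariant P Z.

Definition secT (u v : 'rV[R]_p) := Z @^-1` secR u v.
Definition hypT (u : 'rV[R]_p) := Z @^-1` hypR u.
Definition pr (A : set T) : R := fine (P A).

Lemma mdot (u : 'rV[R]_p) : measurable_fun setT (fun x => dotv u (Z x)).
Proof.
rewrite /dotv; apply: measurable_sum => i.
apply: measurable_realfun.measurable_funM; [exact: measurable_cst | exact: HZ].
Qed.

Lemma meas_ge (u : 'rV[R]_p) : measurable [set x | 0 <= dotv u (Z x)].
Proof.
have -> : [set x | 0 <= dotv u (Z x)] =
   setT `&` (fun x => dotv u (Z x)) @^-1` [set` `[0, +oo[%R].
  apply/seteqP; split => x /=; rewrite in_itv /= ?andbT //; by [move=> H; split|case].
by apply: (mdot u) => //; exact: measurable_itv.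
Qed.

Lemma meas_le (u : 'rV[R]_p) : measurable [set x | dotv u (Z x) <= 0].
Proof.
have -> : [set x | dotv u (Z x) <= 0] =
   setT `&` (fun x => dotv u (Z x)) @^-1` [set` `]-oo, 0]%R].
  apply/seteqP; split => x /=; rewrite in_itv /= ?andbT //; by [move=> H; split|case].
by apply: (mdot u) => //; exact: measurable_itv.
Qed.

Lemma meas_sec (u v : 'rV[R]_p) : measurable (secT u v).
Proof. exact: measurableI (meas_ge u) (meas_le v). Qed.

Lemma meas_hyp (u : 'rV[R]_p) : measurable (hypT u).
Proof.
have -> : hypT u = [set x | 0 <= dotv u (Z x)] `&` [set x | dotv u (Z x) <= 0].
  apply/seteqP; split => x /=; rewrite /hypR /=; first by move=> ->.
  by move=> [H1 H2]; apply/eqP; rewrite eq_le H1 H2.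
exact: measurableI (meas_ge u) (meas_le u).
Qed.

Lemma P_fin A : measurable A -> P A = (pr A)%:E.
Proof. by move=> mA; rewrite /pr fineK // fin_num_measure. Qed.

Lemma pr_ge0 A : 0 <= pr A.
Proof. exact/fine_ge0/measure_ge0. Qed.

Lemma pr_le1 A : measurable A -> pr A <= 1.
Proof. by move=> mA; rewrite -lee_fin -P_fin // probability_le1. Qed.

Lemma pr_le A B : measurable A -> measurable B -> A `<=` B -> pr A <= pr B.
Proof. by move=> mA mB AB; rewrite -lee_fin -!P_fin // le_measure // inE. Qed.

Lemma pr_UI A B : measurable A -> measurable B ->
  pr A + pr B = pr (A `|` B) + pr (A `&` B).
Proof.
move=> mA mB; apply: EFin_inj; rewrite !EFinD -!P_fin //; last 2 first.
- exact: measurableI.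
- exact: measurableU.
rewrite (measureDI P mA mB).
have E : A `|` B = (A `\` B) `|` B.
  apply/seteqP; split => x /=; last by case => [[]|]; auto.
  by case=> Hx; [case: (pselect (B x)) => Hb; [right|left] | right].
have Dj : (A `\` B) `&` B = set0 by apply/seteqP; split => x //= [[]].
rewrite E measureU //; last exact: measurableD.
by rewrite addeAC.
Qed.

Lemma rot_sec (Q : 'M[R]_p) (u v : 'rV[R]_p) : orthogonal_mx Q ->
  P (secT u v) = P (secT (u *m Q^T) (v *m Q^T)).
Proof.
move=> HQ; rewrite /secT (Hrot Q HQ _ (borel_sec u v)); congr (P _).
by apply/seteqP; split => x; rewrite /secR /= !dotv_mulmx.
Qed.

Lemma rot_hyp (Q : 'M[R]_p) (u : 'rV[R]_p) : orthogonal_mx Q ->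
  P (hypT u) = P (hypT (u *m Q^T)).
Proof.
move=> HQ; rewrite /hypT (Hrot Q HQ _ (borel_hyp u)); congr (P _).
by apply/seteqP; split => x; rewrite /hypR /= !dotv_mulmx.
Qed.

Lemma orthK (Q : 'M[R]_p) (u : 'rV[R]_p) : orthogonal_mx Q -> u *m Q *m Q^T = u.
Proof. by move=> HQ; rewrite -mulmxA HQ mulmx1. Qed.

Lemma hyp_same (u e : 'rV[R]_p) : dotv u u = 1 -> dotv e e = 1 ->
  P (hypT u) = P (hypT e).
Proof.
move=> Hu He; case: (rot_to_unit u e Hu He) => [[Q [HQ HuQ]]|[c [Hc Ee]]].
  by rewrite (rot_hyp Q e HQ) -HuQ orthK.
congr (P _); apply/seteqP; split => x; rewrite /hypT /hypR /= Ee dotvZl.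
  by move=> ->; rewrite mulr0.
by move/eqP; rewrite mulf_eq0 (negPf Hc) /= => /eqP.
Qed.



Variable G : set T.
Hypothesis mG : measurable G.
Hypothesis PG0 : P (~` G) = 0.
Hypothesis HG : forall x, G x -> dotv (Z x) (Z x) = 1.

Lemma P_G A : measurable A -> P A = P (A `&` G).
Proof.
move=> mA; rewrite (measureDI P mA mG).
rewrite [X in (X + _)%E](_ : _ = 0%E) ?add0e //.
  apply/eqP; rewrite eq_le measure_ge0 andbT -PG0; apply: le_measure.
  - by rewrite inE; exact: measurableD.
  - by rewrite inE; exact: measurableC.
  - by move=> x [].
Qed.

Lemma count_bound (A : nat -> set T) (N K : nat) :
  (forall k, measurable (A k)) ->
  (forall x, G x -> (count (fun k => x \in A k) (index_iota 0 N) <= K)%N) ->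
  \sum_(0 <= k < N) pr (A k) <= K%:R.
Proof.
move=> mA HK.
rewrite -lee_fin -sumEFin.
have E1 : \sum_(0 <= k < N) (pr (A k))%:E =
    (\int[P]_(x in G) (\sum_(k <- index_iota 0 N) (\1_(A k) x)%:E))%E.
  rewrite ge0_integral_sum //; last first.
    by move=> k; apply/measurable_realfun.measurable_EFinP; exact: measurable_realfun.measurable_indic.
  by apply: eq_bigr => k _; rewrite integral_indic // -P_fin //; exact: P_G.
rewrite E1.
apply: (@le_trans _ _ (\int[P]_(x in G) (cst (K%:R)%:E x))%E).
  apply: ge0_le_integral => //.
  - by move=> x _; rewrite sumEFin lee_fin sumr_ge0 // => k _; rewrite indicE.
  - apply: emeasurable_sum => k; apply/measurable_realfun.measurable_EFinP; exact: measurable_realfun.measurable_indic.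
  - move=> x Gx; rewrite sumEFin lee_fin /=.
    have -> : \sum_(k <- index_iota 0 N) \1_(A k) x =
        (count (fun k => x \in A k) (index_iota 0 N))%:R :> R.
      elim: (index_iota 0 N) => [|k s IH]; first by rewrite big_nil.
      by rewrite big_cons IH /= indicE natrD.
    rewrite ler_nat; exact: HK.
rewrite integral_cst // [X in (_ * X)%E](_ : _ = (pr G)%:E); last exact: P_fin.
rewrite -EFinM lee_fin.
by rewrite ler_piMr // pr_le1.
Qed.


Definition vdm (t : R) : 'rV[R]_p := \row_(i < p) t ^+ i.

Definition zpoly (z : 'rV[R]_p) : {poly R} :=
  \poly_(i < p) odflt 0 (omap (fun j : 'I_p => z 0 j) (insub i)).

Lemma dot_vdm t z : dotv (vdm t) z = (zpoly z).[t].
Proof.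
rewrite /zpoly horner_poly /dotv; apply: eq_bigr => i _.
by rewrite mxE valK /= mulrC.
Qed.

Lemma zpoly_neq0 z : dotv z z = 1 -> zpoly z != 0.
Proof.
move=> Hz; apply/eqP => H0.
have Z0 : z = 0.
  apply/rowP => j; rewrite mxE.
  have := coef_poly p (fun i => odflt 0 (omap (fun j : 'I_p => z 0 j) (insub i))) j.
  by rewrite -/(zpoly z) H0 coef0 ltn_ord valK /= => <-.
by move: Hz; rewrite Z0 dotv0l => /eqP; rewrite eq_sym oner_eq0.
Qed.

Lemma count_roots x N : G x ->
  (count (fun k => x \in hypT (vdm k.+1%:R)) (index_iota 0 N) <= p)%N.
Proof.
move=> Gx; have q0 := zpoly_neq0 _ (HG x Gx).
set s := seq.filter (fun k => x \in hypT (vdm k.+1%:R)) (index_iota 0 N).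
set rs := [seq (k.+1%:R : R) | k <- s].
have Hall : all (root (zpoly (Z x))) rs.
  apply/allP => r /mapP [k]; rewrite mem_filter => /andP [Hk _] ->.
  by rewrite /root -dot_vdm; move: Hk; rewrite inE => /= ->.
have Hu : uniq rs.
  rewrite map_inj_uniq; first by rewrite filter_uniq // iota_uniq.
  by move=> a b /eqP; rewrite eqr_nat eqSS => /eqP.
have := max_poly_roots q0 Hall Hu.
rewrite size_map size_filter => H.
apply: leq_trans (ltnW H) _.
exact: size_poly.
Qed.

Lemma vdm_neq0 t : (0 < p)%N -> vdm t != 0.
Proof.
move=> p0; apply/eqP => /rowP /(_ (Ordinal p0)); rewrite !mxE expr0 => /eqP.
by rewrite oner_eq0.
Qed.

Lemma hyp_scale (c : R) u : c != 0 -> hypT (c *: u) = hypT u.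
Proof.
move=> Hc; apply/seteqP; split => x; rewrite /hypT /hypR /= dotvZl.
  by move/eqP; rewrite mulf_eq0 (negPf Hc) /= => /eqP.
by move=> ->; rewrite mulr0.
Qed.

Lemma hyp_null u : dotv u u = 1 -> pr (hypT u) = 0.
Proof.
move=> Hu.
have p0 : (0 < p)%N.
  case: (posnP p) => // p0; move: Hu; rewrite /dotv.
  by rewrite big_pred0 => [/eqP|i]; [rewrite eq_sym oner_eq0|case: i; rewrite p0].
set m := pr (hypT u).
have Hm : forall t, pr (hypT (vdm t)) = m.
  move=> t; set v := vdm t.
  have Hv : 0 < dotv v v by rewrite lt_def dotv_ge0 andbT; apply/eqP => /dotv_eq0/eqP;
     rewrite (negPf (vdm_neq0 t p0)).
  set sq := Num.sqrt (dotv v v).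
  have Hsq : 0 < sq by rewrite sqrtr_gt0.
  have Hn : dotv (sq^-1 *: v) (sq^-1 *: v) = 1.
    rewrite dotvZl dotvZr -(sqr_sqrtr (ltW Hv)) -/sq expr2; field; exact: lt0r_neq0.
  rewrite /m /pr -(hyp_scale _ v (invr_neq0 (lt0r_neq0 Hsq))).
  by rewrite (hyp_same _ _ Hn Hu).
have HN : forall N : nat, m *+ N <= p%:R.
  move=> N; have := count_bound (fun k => hypT (vdm k.+1%:R)) N p
    (fun k => meas_hyp _) (fun x Gx => count_roots x N Gx).
  rewrite (eq_bigr (fun=> m)) ?sumr_const_nat ?subn0 // => k _; exact: Hm.
have m0 : 0 <= m by exact: pr_ge0.
apply/eqP; rewrite eq_le m0 andbT leNgt; apply/negP => mpos.
set N := (Num.Def.trunc (p%:R / m)).+1.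
have := HN N.
have := truncn_itv (divr_ge0 (ler0n _ p) m0); rewrite -/N => /andP [_ HN2].
rewrite ltr_pdivrMr // in HN2.
by move=> H; move: HN2; rewrite ltNge mulr_natl H.
Qed.


Lemma sec_bound (a e2 : 'rV[R]_p) (t : R) :
  dotv a a = 1 -> dotv e2 e2 = 1 -> dotv a e2 = 0 -> 0 < t < 1 ->
  pr (secT a (cos t *: a + sin t *: e2)) <= t.
Proof.
move=> Ha Hb Hab /andP [t0 t1].
set R0 := rotmx a e2 (cos t) (sin t).
have HR : orthogonal_mx R0 by apply: rot_orth => //; exact: cos2Dsin2.
set c := citer a e2 (cos t) (sin t).
have c0 : c 0%N = a by [].
have c1 : c 1%N = cos t *: a + sin t *: e2.
  by rewrite /c citer_trig // mul1r.
set m := pr (secT (c 0%N) (c 1%N)).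
have Hstep : forall k, pr (secT (c k) (c k.+1)) = m.
  elim => [//|k IH]; rewrite -IH /pr (rot_sec R0 (c k.+1) (c k.+2) HR).
  by rewrite /c !citerS !orthK.
have pi2 := pi_ge2 R.
have Hsin : forall k : nat, (0 < k)%N -> k%:R * t < pi -> 0 < sin (k%:R * t).
  move=> k k0 Hk; apply: sin_gt0_pi; rewrite Hk andbT mulr_gt0 //.
  by rewrite ltr0n.
have Hchain : forall k, (0 < k)%N -> k%:R * t < pi -> k%:R * m <= pr (secT (c 0%N) (c k)).
  elim => [//|k IH] _ Hk.
  case: (posnP k) => [->|kpos]; first by rewrite mul1r.
  have Hk' : k%:R * t < pi.
    apply: le_lt_trans Hk; rewrite ler_pM2r // ler_nat; exact: leqnSn.
  have s0 : 0 < sin t.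
    by have := Hsin 1%N isT; rewrite mul1r; apply; lra.
  have sk := Hsin k kpos Hk'.
  have sk1 := Hsin k.+1 isT Hk.
  have Hd : forall z, sin (k.+1%:R * t) * dotv (c k) z =
      sin t * dotv (c 0%N) z + sin (k%:R * t) * dotv (c k.+1) z.
    by move=> z; rewrite -dotvZl /c citer_between // dotvDl !dotvZl.
  set A := secT (c 0%N) (c k); set B := secT (c k) (c k.+1); set C := secT (c 0%N) (c k.+1).
  have mA : measurable A by exact: meas_sec.
  have mB : measurable B by exact: meas_sec.
  have mC : measurable C by exact: meas_sec.
  have HU : A `|` B `<=` C.
    move=> x [[H1 H2]|[H1 H2]]; rewrite /C /secT /secR /=; have := Hd (Z x).
    - by split => //; nra.
    - by split => //; nra.
  have HI : A `&` B `<=` hypT (c k).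
    by move=> x [[_ H1] [H2 _]]; rewrite /hypT /hypR /=; apply/eqP; rewrite eq_le H1 H2.
  have Hn : pr (hypT (c k)) = 0 by apply: hyp_null; exact: citer_unit.
  have := pr_UI _ _ mA mB.
  have := pr_le _ _ (measurableU _ _ mA mB) mC HU.
  have := pr_le _ _ (measurableI _ _ mA mB) (meas_hyp _) HI.
  rewrite Hn Hstep.
  have := IH kpos Hk'.
  rewrite mulrSr mulrDl mul1r; lra.
set n := (Num.Def.trunc t^-1).+1.
have tpos : 0 < t^-1 by rewrite invr_gt0.
have := truncn_itv (ltW tpos); rewrite -/n => /andP [Hn1 Hn2].
have Hnt : 1 < n%:R * t.
  by rewrite -[X in X < _](mulVf (lt0r_neq0 t0)) ltr_pM2r.
have Hnt2 : n%:R * t < pi.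
  have : n%:R <= t^-1 + 1 by rewrite /n -addn1 natrD lerD2r.
  move=> H; apply: (@lt_le_trans _ _ 2) => //.
  have : n%:R * t <= (t^-1 + 1) * t by rewrite ler_pM2r.
  rewrite mulrDl mulVf ?mul1r; last exact: lt0r_neq0.
  by move=> H2; lra.
have n0 : (0 < n)%N by [].
have := Hchain n n0 Hnt2.
have := pr_le1 _ (meas_sec (c 0%N) (c n)).
rewrite -c1 -c0 -/m => Hle1 Hnm.
have m0 : 0 <= m := pr_ge0 _.
nra.
Qed.


Lemma intG (f : T -> R) : measurable_fun setT f ->
  (\int[P]_x (f x)%:E = \int[P]_(x in G) (f x)%:E)%E.
Proof.
move=> mf.
have E : [set: T] = G `|` ~` G by rewrite setUCr.
rewrite E integral_setU //; last 3 first.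
- exact: measurableC.
- by apply/measurable_realfun.measurable_EFinP; rewrite -E.
- by rewrite /disj_set setICr.
rewrite [X in (_ + X)%E]null_set_integral; last 3 first.
- exact: measurableC.
- apply/measurable_realfun.measurable_EFinP.
  exact: (measurable_funS measurableT (@subsetT _ _) mf).
- exact: PG0.
by rewrite adde0.
Qed.

Lemma bnd_int (B : R) (f : T -> R) : measurable_fun setT f ->
  (forall x, G x -> `|f x| <= B) -> P.-integrable G (EFin \o f).
Proof.
move=> mf Hb; apply: measurable_bounded_integrable => //.
- by rewrite [X in (X < _)%E](_ : _ = (pr G)%:E) ?ltry //; exact: P_fin.
- exact: (measurable_funS measurableT (@subsetT _ _) mf).
- rewrite /bounded_near; exists B; split; first exact: num_real.
  move=> M HM x Gx; apply: le_trans (Hb x Gx) _; exact: ltW.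
Qed.

Lemma int_sum (I : Type) (s : seq I) (g : I -> T -> R) :
  (forall k, P.-integrable G (EFin \o g k)) ->
  P.-integrable G (EFin \o (fun x => \sum_(k <- s) g k x)).
Proof.
move=> Hg; elim: s => [|k s IH].
  have -> : EFin \o (fun x => \sum_(k <- [::]) g k x) = cst 0%E.
    by apply/funext => x; rewrite /= big_nil.
  exact: integrable0.
have -> : EFin \o (fun x => \sum_(j <- k :: s) g j x) =
   (EFin \o g k) \+ (EFin \o (fun x => \sum_(j <- s) g j x)).
  by apply/funext => x; rewrite /= big_cons EFinD.
exact: integrableD.
Qed.

Lemma Rint_sum (I : Type) (s : seq I) (g : I -> T -> R) :
  (forall k, P.-integrable G (EFin \o g k)) ->
  Rintegral P G (fun x => \sum_(k <- s) g k x) = \sum_(k <- s) Rintegral P G (g k).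
Proof.
move=> Hg; elim: s => [|k s IH].
  have -> : (fun x => \sum_(k <- [::]) g k x) = (fun=> 0).
    by apply/funext => x; rewrite big_nil.
  by rewrite Rintegral_cst // mul0r big_nil.
have -> : (fun x => \sum_(j <- k :: s) g j x) =
   (fun x => g k x + \sum_(j <- s) g j x).
  by apply/funext => x; rewrite big_cons.
rewrite RintegralD //; last exact: int_sum.
by rewrite IH big_cons.
Qed.

Lemma coord_le1 (z : 'rV[R]_p) i : dotv z z = 1 -> `|z 0 i| <= 1.
Proof.
move=> Hz.
have H : z 0 i ^+ 2 <= 1.
  rewrite -Hz /dotv (bigD1 i) //= expr2 lerDl sumr_ge0 // => j _.
  by rewrite -expr2 sqr_ge0.
have Hn : `|z 0 i| ^+ 2 = z 0 i ^+ 2 by rewrite real_normK ?num_real.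
have := normr_ge0 (z 0 i).
nra.
Qed.

Lemma eig_bound (w ws : 'rV[R]_p) (a : R) :
  eigenvalue (Amat P Z w ws) a -> a <= pr (secT w ws).
Proof.
case/eigenvalueP => v Hv v0.
set S := secT w ws.
have mS : measurable S by exact: meas_sec.
set ind := fun x => ((0 <= dotv w (Z x)) && (dotv ws (Z x) <= 0))%:R : R.
have Hind : ind = \1_S.
  apply/funext => x; rewrite indicE /ind.
  case: (boolP (x \in S)) => [/set_mem [H1 H2]|HS]; first by rewrite H1 H2.
  suff -> : ((0 <= dotv w (Z x)) && (dotv ws (Z x) <= 0)) = false by [].
  by apply/negP => /andP [H1 H2]; apply: (negP HS); apply/mem_set; split.
have mind : measurable_fun setT ind by rewrite Hind; exact: measurable_realfun.measurable_indic.
have ind01 : forall x, 0 <= ind x <= 1.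
  move=> x; rewrite /ind; case: ((0 <= dotv w (Z x)) && (dotv ws (Z x) <= 0)) => /=; by rewrite ?lexx ?ler01.
set f := fun (i j : 'I_p) x => Z x 0 i * Z x 0 j * ind x.
have mf : forall i j, measurable_fun setT (f i j).
  move=> i j; apply: measurable_realfun.measurable_funM => //.
  by apply: measurable_realfun.measurable_funM; exact: HZ.
have bndf : forall i j x, G x -> `|f i j x| <= 1.
  move=> i j x Gx; rewrite /f !normrM.
  have h1 := coord_le1 (Z x) i (HG x Gx); have h2 := coord_le1 (Z x) j (HG x Gx).
  have h3 : `|ind x| <= 1 by have := ind01 x; case/andP => h4 h5; rewrite ger0_norm.
  rewrite -[1](mul1r 1); apply: ler_pM; [exact: mulr_ge0 | exact: normr_ge0 | | exact: h3].
  rewrite -[1](mul1r 1); exact: ler_pM.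
have intc : forall (c : R) i j, P.-integrable G (EFin \o (fun x => c * f i j x)).
  move=> c i j; apply: (bnd_int `|c|).
    by apply: measurable_realfun.measurable_funM => //; exact: measurable_cst.
  move=> x Gx; rewrite normrM; rewrite -[X in _ <= X]mulr1.
  by rewrite ler_wpM2l // bndf.
have intf : forall i j, P.-integrable G (EFin \o f i j).
  by move=> i j; apply: (bnd_int 1) => //; exact: bndf.
set g := fun (j : 'I_p) x => \sum_(i < p) v 0 i * v 0 j * f i j x.
set F := fun x => \sum_(j < p) g j x.
have intg : forall j, P.-integrable G (EFin \o g j).
  by move=> j; apply: int_sum => i; exact: intc.
have intF : P.-integrable G (EFin \o F) by apply: int_sum.
have Hq : dotv (v *m Amat P Z w ws) v = Rintegral P G F.
  rewrite /F (Rint_sum _ _ _ intg) /dotv; apply: eq_bigr => j _.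
  rewrite /g (Rint_sum _ _ _ (fun i => intc (v 0 i * v 0 j) i j)).
  rewrite mxE mulr_suml; apply: eq_bigr => i _.
  have -> : Amat P Z w ws i j = Rintegral P G (f i j).
    by rewrite mxE /Rintegral -intG.
  by rewrite RintegralZl // mulrAC.
have HF : forall x, F x = dotv v (Z x) ^+ 2 * ind x.
  move=> x; transitivity (dotv v (Z x) * (dotv v (Z x) * ind x)); last by rewrite expr2 mulrA.
  rewrite {2}/dotv mulr_suml; apply: eq_bigr => j _.
  rewrite /g /dotv mulr_suml mulr_sumr; apply: eq_bigr => i _.
  rewrite /f; ring.
have intI : P.-integrable G (EFin \o (fun x => dotv v v * ind x)).
  apply: (bnd_int `|dotv v v|).
    by apply: measurable_realfun.measurable_funM => //; exact: measurable_cst.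
  move=> x Gx; rewrite normrM -[X in _ <= X]mulr1 ler_wpM2l //.
  by have := ind01 x; case/andP => h4 h5; rewrite ger0_norm.
have Hle : Rintegral P G F <= Rintegral P G (fun x => dotv v v * ind x).
  apply: le_Rintegral => // x Gx; apply: (@le_trans _ _ (dotv v (Z x) ^+ 2 * ind x)); first by rewrite -HF.
  have := ind01 x; case/andP => h4 _.
  apply: ler_wpM2r => //; have := CS v (Z x); by rewrite (HG x Gx) mulr1.
have HI : Rintegral P G (fun x => dotv v v * ind x) = dotv v v * pr S.
  rewrite RintegralZl //; last by apply: (bnd_int 1) => // x _; have := ind01 x;
    case/andP => h4 h5; rewrite ger0_norm.
  congr (_ * _); rewrite Hind /Rintegral integral_indic //.
  by rewrite /pr; apply/esym; congr fine; exact: P_G.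
have Hv2 : 0 < dotv v v by rewrite lt_def dotv_ge0 andbT; apply/eqP => /dotv_eq0 /eqP;
  rewrite (negPf v0).
have := Hle; rewrite HI -Hq Hv dotvZl mulrC ler_pM2l //.
Qed.


End Prob.

Theorem theorem7 (R : realType) (d : measure_display) (T : measurableType d)
  (P : probability T R) (p : nat) (Z : T -> 'rV[R]_p) (ws : 'rV[R]_p) :
  (forall i : 'I_p, measurable_fun setT (fun x => Z x 0 i)) ->
  rot_invariant P Z ->
  {ae P, forall x, vnorm (Z x) = 1} ->
  ws != 0 ->
  forall phi : R, 0 <= phi <= pi / 2 ->
  forall w : 'rV[R]_p, w != 0 -> vangle w ws <= phi ->
  forall a : R, eigenvalue (Amat P Z w ws) a -> a <= phi.
Proof.
move=> HZ Hrot Hae ws0 phi /andP [phi0 phi2] w w0 Hang a Heig.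
case: Hae => N [mN PN HN].
set G := ~` N.
have mG : measurable G by exact: measurableC.
have PG0 : P (~` G) = 0 by rewrite /G setCK.
have HG : forall x, G x -> dotv (Z x) (Z x) = 1.
  move=> x Gx.
  have Hv : vnorm (Z x) = 1.
    case: (pselect (vnorm (Z x) = 1)) => // Hn; exfalso; apply: Gx; exact: HN.
  by rewrite -(sqr_sqrtr (dotv_ge0 (Z x))) -/(vnorm (Z x)) Hv expr1n.
have Heb := eig_bound R d T P p Z HZ G mG PG0 HG w ws a Heig.
apply: le_trans Heb _; apply: le_trans Hang.
set S := secT R d T p Z w ws.
have mS : measurable S by exact: meas_sec.
set t0 := vangle w ws.
have pos_dot : forall u : 'rV[R]_p, u != 0 -> 0 < dotv u u.
  by move=> u u0; rewrite lt_def dotv_ge0 andbT; apply/eqP => /dotv_eq0 /eqP; rewrite (negPf u0).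
have nw : 0 < vnorm w by rewrite sqrtr_gt0 pos_dot.
have nws : 0 < vnorm ws by rewrite sqrtr_gt0 pos_dot.
set a0 := (vnorm w)^-1 *: w.
set b0 := (vnorm ws)^-1 *: ws.
have unit_of : forall u : 'rV[R]_p, 0 < vnorm u -> dotv ((vnorm u)^-1 *: u) ((vnorm u)^-1 *: u) = 1.
  move=> u nu; rewrite dotvZl dotvZr.
  have : vnorm u ^+ 2 = dotv u u by rewrite sqr_sqrtr // dotv_ge0.
  move=> <-; field; exact: lt0r_neq0.
have Ha0 : dotv a0 a0 = 1 by exact: unit_of.
have Hb0 : dotv b0 b0 = 1 by exact: unit_of.
set r := dotv a0 b0.
have Hr : r = dotv w ws / (vnorm w * vnorm ws).
  rewrite /r /a0 /b0 dotvZl dotvZr; field; apply/andP; split; exact: lt0r_neq0.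
have Hr1 : -1 <= r <= 1.
  have := CS a0 b0; rewrite Ha0 Hb0 mulr1 -/r => H; apply/andP; split; nra.
have Ht0 : t0 = acos r by rewrite /t0 /vangle Hr.
have [/andP [t0ge0 t0lepi] cost0] : (0 <= t0 <= pi) /\ cos t0 = r.
  by rewrite Ht0; exact: acos_def.
have sint0 : sin t0 = Num.sqrt (1 - r ^+ 2) by rewrite Ht0 sin_acos.
have HSab : S = secT R d T p Z a0 b0.
  apply/seteqP; split => x; rewrite /S /secT /secR /= /a0 /b0 !dotvZl.
  - move=> [H1 H2]; split.
      by apply: mulr_ge0 => //; rewrite invr_ge0 ltW.
    by rewrite pmulr_rle0 // invr_gt0.
  - move=> [H1 H2]; split.
      by rewrite pmulr_rge0 // invr_gt0 in H1.
    by rewrite pmulr_rle0 // invr_gt0 in H2.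
clearbody a0 b0.
have [t1|t1] := leP 1 t0.
  by apply: le_trans t1; exact: pr_le1.
have pi2 := pi_ge2 R.
have cpos : 0 < r.
  rewrite -cost0; apply: cos_gt0_pihalf; apply/andP; split; lra.
have [s0|spos] := eqVneq (sin t0) 0.
  have r1 : r = 1.
    move: s0; rewrite sint0 => /eqP; rewrite sqrtr_eq0 => H; nra.
  have Eab : b0 = a0.
    apply/eqP; rewrite -subr_eq0; apply/eqP; apply: dotv_eq0.
    rewrite !(dotvBl, dotvBr) Ha0 Hb0 (dotvC b0 a0) -/r r1; ring.
  apply: le_trans t0ge0.
  rewrite HSab Eab.
  have := hyp_null R d T P p Z HZ Hrot G mG PG0 HG a0 Ha0.
  move=> <-; apply: pr_le => //; first exact: meas_sec.
    exact: meas_hyp.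
  by move=> x [H1 H2]; rewrite /hypT /hypR /=; apply/eqP; rewrite eq_le H1 H2.
have sgt : 0 < sin t0 by rewrite lt_def spos sint0 sqrtr_ge0.
set e2 := (sin t0)^-1 *: (b0 - r *: a0).
have Hs2 : sin t0 ^+ 2 = 1 - r ^+ 2.
  by rewrite sint0 sqr_sqrtr // subr_ge0; nra.
have Hd : dotv (b0 - r *: a0) (b0 - r *: a0) = 1 - r ^+ 2.
  rewrite !dotvBl !dotvBr !dotvZl !dotvZr.
  rewrite Ha0 Hb0 (dotvC b0 a0) -/r; ring.
have He2 : dotv e2 e2 = 1.
  rewrite /e2 dotvZl dotvZr Hd -Hs2; field; exact: lt0r_neq0.
have Hae2 : dotv a0 e2 = 0.
  rewrite /e2 dotvZr dotvBr dotvZr Ha0 -/r; ring.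
have Hb0e : cos t0 *: a0 + sin t0 *: e2 = b0.
  rewrite /e2 scalerA mulfV ?scale1r; last exact: lt0r_neq0.
  by rewrite cost0 addrC subrK.
have t0pos : 0 < t0.
  rewrite lt_def t0ge0 andbT; apply/eqP => E0; move: spos; rewrite E0 sin0; by rewrite eqxx.
rewrite HSab -Hb0e.
apply: (sec_bound R d T P p Z HZ Hrot G mG PG0 HG) => //.
by rewrite t0pos t1.
Qed.
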